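(* If $\mathcal{I}$ is a hereditary weak P-ideal, then $\omega_1$ with the order topology is in $\mathrm{FinBW}(\mathcal{I})$. In particular, there is a non-compact space in $\mathrm{FinBW}(\mathcal{I})$.
   Context: An ideal on an infinite countable set $X$ is a family $\mathcal{I}\subseteq\mathcal{P}(X)$ closed under subsets and finite unions, containing all finite subsets, with $X\notin\mathcal{I}$. $\mathcal{I}|Y=\{A\cap Y:A\in\mathcal{I}\}$. A space $X$ is in $\mathrm{FinBW}(\mathcal{I})$ if $X$ is Hausdorff and for every sequence $(x_n)_{n\in\bigcup\mathcal{I}}$ in $X$ there is $A\notin\mathcal{I}$ with $(x_n)_{n\in A}$ convergent in $X$. $\mathrm{Fin}^2$: ideal on $\omega^2$ of all $A$ with only finitely many $n$ such that $\{m:(n,m)\in A\}$ is infinite. $\mathcal{I}\sqsubseteq\mathcal{J}$: there is a bijection $f:\bigcup\mathcal{J}\to\bigcup\mathcal{I}$ with $f^{-1}[A]\in\mathcal{J}$ for all $A\in\mathcal{I}$. $\mathcal{I}$ is a hereditary weak P-ideal if $\mathrm{Fin}^2\not\sqsubseteq\mathcal{I}|A$ for every $A\notin\mathcal{I}$. *)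

(* Defs.v *)
From HB Require Import structures.
From mathcomp Require Import all_boot all_order all_algebra.
From mathcomp Require Import all_classical all_reals all_analysis.
Set Implicit Arguments. Unset Strict Implicit. Unset Printing Implicit Defensive.
Import Order.TTheory.
Local Open Scope classical_set_scope.

Definition is_ideal (X : Type) (I : set (set X)) : Prop :=
  [/\ (forall A B, B `<=` A -> I A -> I B),
      (forall A B, I A -> I B -> I (A `|` B)),
      (forall A, finite_set A -> I A) &
      ~ I [set: X]].

Definition restr (X : Type) (I : set (set X)) (Y : set X) : set (set X) :=
  [set C | exists2 D, I D & C = D `&` Y].

Definition Fin2 : set (set (nat * nat)) :=
  [set B | finite_set [set n | infinite_set [set m | B (n, m)]]].

(* Fin^2 ⊑ I|A : there is a bijection f : A (= ⋃ (I|A)) -> ω×ω (= ⋃ Fin^2)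
   with f^{-1}[B] ∈ I|A for all B ∈ Fin^2. *)
Definition Fin2_below_restr (X : Type) (I : set (set X)) (A : set X) : Prop :=
  exists f : X -> nat * nat,
    [/\ {in A &, injective f},
        (forall p, exists2 n, A n & f n = p) &
        (forall B, Fin2 B -> restr I A (A `&` f @^-1` B))].

Definition hereditary_weakP (X : Type) (I : set (set X)) : Prop :=
  forall A, ~ I A -> ~ Fin2_below_restr I A.

(* (x_n)_{n ∈ A} converges to l (A infinite index set, cofinite filter on A) *)
Definition converges_on (X : Type) (T : topologicalType) (A : set X)
  (x : X -> T) (l : T) : Prop :=
  forall U, nbhs l U -> finite_set (A `&` [set n | ~ U (x n)]).

(* T ∈ FinBW(I); sequences are indexed by ⋃ I = X. *)
Definition FinBW (X : Type) (I : set (set X)) (T : topologicalType) : Prop :=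
  hausdorff_space T /\
  forall x : X -> T, exists2 A, ~ I A & exists l, converges_on A x l.

(* W is (order-isomorphic to) ω₁: a well-order that is uncountable and all of
   whose proper initial segments are countable. *)
Definition is_omega1 (d : Order.disp_t) (W : orderType d) : Prop :=
  [/\ (forall S : set W, S !=set0 -> exists2 m, S m & forall y, S y -> (m <= y)%O),
      ~ countable [set: W] &
      (forall w : W, countable [set y | (y < w)%O])].

(* Main.v *)
Require Import Defs.
From HB Require Import structures.
From mathcomp Require Import all_boot all_order all_algebra.
From mathcomp Require Import all_classical all_reals all_analysis.
From mathcomp Require Import wochoice.
Local Open Scope classical_set_scope.

Set Implicit Arguments. Unset Strict Implicit. Unset Printing Implicit Defensive.
Import Order.TTheory.

Section Ideal.
Variables (X : Type) (I : set (set X)).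
Hypothesis hI : is_ideal I.

Lemma idS A B : B `<=` A -> I A -> I B.
Proof. by case: hI => h _ _ _; apply: h. Qed.

Lemma idU A B : I A -> I B -> I (A `|` B).
Proof. by case: hI => _ h _ _; apply: h. Qed.

Lemma idF A : finite_set A -> I A.
Proof. by case: hI => _ _ h _; apply: h. Qed.

Lemma id0 : I set0.
Proof. exact/idF/finite_set0. Qed.

Lemma idbig (P : nat -> set X) : (forall k, I (P k)) ->
  forall N, I (\bigcup_(k in [set k | (k < N)%N]) P k).
Proof.
move=> HP; elim=> [|N IH].
  by apply: idS id0 => x [k /=].
apply: idS (idU IH (HP N)) => x [k /= kN Pk].
case: (ltngtP k N) => [kn|//|ke]; first by left; exists k.
  by move: kN; rewrite ltnS leqNgt => /negP.
by right; rewrite -ke.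
Qed.

End Ideal.

Lemma fin_pre {T U} (A : set T) (B : set U) (f : T -> U) :
  {in A &, injective f} -> finite_set B -> finite_set (A `&` f @^-1` B).
Proof.
move=> fi fB.
have e : (f @` (A `&` f @^-1` B) #= (A `&` f @^-1` B))%card.
  apply: inj_card_eq => x y; rewrite !inE => -[xA _] [yA _]; apply: fi; rewrite inE //.
rewrite -(eq_finite_set e); apply: sub_finite_set fB.
by move=> _ [x [_ ?] <-].
Qed.

Lemma fin_bound (A : set nat) : finite_set A -> exists N, forall k, A k -> (k < N)%N.
Proof.
move=> /finite_fsetP[S ->]; exists (\big[maxn/0%N]_(i <- finmap.enum_fset S) i).+1 => k /= kS.
rewrite ltnS; exact: (@leq_bigmax_seq _ _ xpredT id k).
Qed.


Lemma core (X : Type) (I : set (set X)) (B : set X) (kf : X -> nat) :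
  countable [set: X] -> is_ideal I -> hereditary_weakP I -> ~ I B ->
  (forall j, I (B `&` [set n | kf n = j])) ->
  exists2 A, A `<=` B & ~ I A /\ (forall j, finite_set (A `&` [set n | kf n = j])).
Proof.
move=> cX hI hP nIB HP.
apply: contrapT => Hn.
have H : forall A, A `<=` B -> (forall j, finite_set (A `&` [set n | kf n = j])) -> I A.
  by move=> A AB Af; apply: contrapT => nIA; apply: Hn; exists A.
pose P j := B `&` [set n | kf n = j].
pose K := [set j | infinite_set (P j)].
pose F := [set n | B n /\ finite_set (P (kf n))].
pose G := [set n | B n /\ infinite_set (P (kf n))].
have IF : I F.
  apply: H => [n []//|j].
  have [fj|ij] := pselect (finite_set (P j)).
    by apply: sub_finite_set fj => n [[Bn _] /= <-]; split.
  apply: sub_finite_set (finite_set0 X) => n [[_ fn] /= e]; apply: ij.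
  by rewrite -e.
have nIG : ~ I G.
  move=> IG; apply: nIB; apply: (idS hI _ (idU hI IF IG)) => n Bn.
  by have [fn|inf] := pselect (finite_set (P (kf n))); [left|right].
have infK : infinite_set K.
  move=> /fin_bound [N HN]; apply: nIG; apply: (idS hI _ (idbig hI HP N)) => n [Bn inf].
  by exists (kf n); [exact: HN | split].
have /card_set_bijP [jK [_ jKi jKs]] : (K #= [set: nat])%card.
  by apply: eq_card_nat.
have [g Hg] : {g : nat -> X -> nat & forall k, K k -> set_bij (P k) [set: nat] (g k)}.
  apply: (choice (P := fun k g => K k -> set_bij (P k) [set: nat] g)) => k.
  have [Kk|nKk] := pselect (K k); last by exists (fun _ => 0%N).
  have : (P k #= [set: nat])%card.
    apply: eq_card_nat => //.
    by apply: sub_countable cX; apply: subset_card_le.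
  by move=> /card_set_bijP [gk Hgk]; exists gk.
pose f n := (jK (kf n), g (kf n) n).
have fb : Fin2_below_restr I G.
  exists f; split.
  - move=> n m; rewrite !inE => -[Bn In] [Bm Im] /= [e1 e2].
    have ek : kf n = kf m by apply: jKi => //; apply/mem_set.
    rewrite -ek in e2 Im.
    have [_ gi _] := Hg _ In.
    by apply: gi => //; apply/mem_set; split.
  - case=> a b.
    have [k Kk <-] := jKs a Logic.I.
    have [_ _ gs] := Hg _ Kk.
    have [n [Bn kn] <-] := gs b Logic.I.
    move: kn => /= kn; exists n; [by split => //; rewrite /= kn | by rewrite /f kn].
  - move=> B0 FB0.
    exists (G `&` f @^-1` B0); last by rewrite [RHS]setIC setIA setIid.
    pose Ns := [set a | infinite_set [set b | B0 (a, b)]].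
    pose S1 := G `&` f @^-1` B0 `&` [set n | Ns (jK (kf n))].
    pose S2 := G `&` f @^-1` B0 `&` [set n | ~ Ns (jK (kf n))].
    have IS1 : I S1.
      have [M HM] := fin_bound (fin_pre jKi FB0).
      apply: (idS hI _ (idbig hI HP M)) => n [[[Bn In] _] Nn].
      by exists (kf n) => //; apply: HM.
    have IS2 : I S2.
      apply: H => [n [[[]]]//|j].
      have [Kj|nKj] := pselect (K j); last first.
        apply: sub_finite_set (finite_set0 X) => n [[[[_ In] _] _] /= e].
        by apply: nKj; rewrite -e.
      have [Nj|nNj] := pselect (Ns (jK j)).
        apply: sub_finite_set (finite_set0 X) => n [[_ Nn] /= e].
        by apply: Nn; rewrite e.
      have fj : finite_set [set b | B0 (jK j, b)] by apply: contrapT.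
      have [_ gi _] := Hg _ Kj.
      apply: sub_finite_set (fin_pre gi fj) => n [[[[Bn In] Fn] _] /= e].
      by split; [split | rewrite /= -e].
    apply: (idS hI _ (idU hI IS1 IS2)) => n Sn.
    by have [Nn|nNn] := pselect (Ns (jK (kf n))); [left|right].
exact: (hP G nIG fb).
Qed.


Lemma nbhs_left d (W : orderType d) (l : W) (U : set (order_topology W)) :
  nbhs (l : order_topology W) U ->
  (forall y : W, (y <= l)%O -> U y) \/
  exists2 a : W, (a < l)%O & forall y : W, (a < y)%O -> (y <= l)%O -> U y.
Proof.
rewrite order_nbhs_itv => -[[lb rb] [oe li] iU].
move: li; rewrite itv_boundlr => /andP[h1 h2].
case: lb oe h1 iU => [b a | b] oe h1 iU.
- have bf := itv_open_ends_lside oe; subst b.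
  right; exists a; first by move: h1; rewrite bnd_simp.
  move=> y ay yl; apply: iU; rewrite /= itv_boundlr; apply/andP; split.
    by rewrite bnd_simp.
  by apply: le_trans h2; rewrite bnd_simp.
- have bt := itv_open_ends_linfty oe; subst b.
  left => y yl; apply: iU; rewrite /= itv_boundlr; apply/andP; split => //.
  by apply: le_trans h2; rewrite bnd_simp.
Qed.


Lemma omega1_seq (X : Type) (I : set (set X)) d (W : orderType d) :
  countable [set: X] -> is_ideal I -> hereditary_weakP I -> is_omega1 W ->
  forall x : X -> W, exists2 A, ~ I A & exists l : order_topology W, converges_on (T := order_topology W) A x l.
Proof.
move=> cX hI hP [Wmin Wunc Wseg] x.
have [b Hb] : exists b, forall n, (x n <= b)%O.
  apply: contrapT => nb; apply: Wunc.
  have -> : [set: W] = \bigcup_(n in [set: X]) [set y | (y < x n)%O].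
    apply/seteqP; split => y // _.
    have [n hn] : exists n, ~ (x n <= y)%O.
      apply: contrapT => h; apply: nb; exists y => n; apply: contrapT => h'.
      by apply: h; exists n.
    by exists n => //=; rewrite ltNge; apply/negP.
  by apply: bigcup_countable => // n _; apply: Wseg.
pose S := [set a : W | ~ I [set n | (x n <= a)%O]].
have Sb : S b.
  rewrite /S /=; have -> : [set n | (x n <= b)%O] = [set: X].
    by apply/seteqP; split=> n // _; apply: Hb.
  by case: hI.
have [l Sl lmin] := Wmin S (ex_intro _ b Sb).
have below : forall a, (a < l)%O -> I [set n | (x n <= a)%O].
  move=> a al; apply: contrapT => h; have := lmin a h.
  by rewrite leNgt al.
pose C := [set n | x n = l].
have [nIC|IC] := pselect (~ I C).
  exists C => //; exists l => U Ul.
  apply: sub_finite_set (finite_set0 X) => n [/= -> nU]; apply: nU.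
  exact: nbhs_singleton Ul.
have {}IC : I C by apply: contrapT.
pose B := [set n | (x n < l)%O].
have nIB : ~ I B.
  move=> IB; apply: Sl; apply: (idS hI _ (idU hI IB IC)) => n /= h.
  by rewrite le_eqVlt in h; case/orP: h => [/eqP|]; [right|left].
have /countable_injP [c ci] := Wseg l.
have [n0 Bn0] : exists n0, B n0.
  apply: contrapT => h; apply: nIB; apply: (idS hI _ (id0 hI)) => n Bn.
  by apply: h; exists n.
have [e He] : {e : nat -> W & forall k, (e k < l)%O /\
    ((exists y, (y < l)%O /\ c y = k) -> c (e k) = k)}.
  apply: (choice (P := fun k ek => (ek < l)%O /\
    ((exists y, (y < l)%O /\ c y = k) -> c ek = k))) => k.
  have [[y [yl cy]]|ne] := pselect (exists y, (y < l)%O /\ c y = k).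
    by exists y; split.
  by exists (x n0); split => // h; exfalso.
have eS : forall y, (y < l)%O -> e (c y) = y.
  move=> y yl; have [el ce] := He (c y).
  apply: ci; [exact/mem_set | exact/mem_set | apply: ce; exists y; split => //].
have [kf Hkf] : {kf : X -> nat & forall n, B n -> (x n <= e (kf n))%O /\
    forall j, (x n <= e j)%O -> (kf n <= j)%N}.
  apply: (choice (P := fun n kn => B n -> (x n <= e kn)%O /\
    forall j, (x n <= e j)%O -> (kn <= j)%N)) => n.
  have [Bn|nBn] := pselect (B n); last by exists 0%N.
  have ex : exists k, (x n <= e k)%O by exists (c (x n)); rewrite eS.
  case: (find_ex_minn ex) => m Pm mmin.
  by exists m => _; split => // j; exact: mmin.
have HP : forall j, I (B `&` [set n | kf n = j]).
  move=> j; apply: (idS hI _ (below _ (proj1 (He j)))) => n [Bn /= <-].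
  exact: (Hkf n Bn).1.
have [A AB [nIA Af]] := core cX hI hP nIB HP.
exists A => //; exists l => U /nbhs_left [Hall | [a al Ha]].
  apply: sub_finite_set (finite_set0 X) => n [An nU]; apply: nU; apply: Hall.
  exact/ltW/AB.
have fD : finite_set [set j | (j <= c a)%N].
  by apply: (sub_finite_set _ (finite_II (c a).+1)) => j /=; rewrite ltnS.
apply: sub_finite_set (bigcup_finite fD (fun j _ => Af j)) => n [An nU].
exists (kf n) => //=.
apply: (Hkf n (AB n An)).2; rewrite eS //.
rewrite leNgt; apply/negP => ax; apply: nU; apply: Ha => //.
exact/ltW/AB.
Qed.


Lemma omega1_noncompact d (W : orderType d) :
  is_omega1 W -> ~ compact [set: order_topology W].
Proof.
move=> [Wmin Wunc Wseg] cc.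
have cov : forall y : W, exists w : W, (y < w)%O.
  move=> y; apply: contrapT => h; apply: Wunc.
  have -> : [set: W] = \bigcup_(b in [set: bool])
      (if b then [set z | (z < y)%O] else [set y]).
    apply/seteqP; split => z // _.
    have [zy|yz|->] := ltgtP z y; first by exists true.
      by exfalso; apply: h; exists z.
    by exists false.
  apply: bigcup_countable => // -[] _ //; exact: Wseg.
have [w0 _] : exists w0 : W, True.
  apply: contrapT => h; apply: Wunc.
  have -> : [set: W] = set0 by apply/seteqP; split => z // _; apply: h; exists z.
  exact: countable0.
pose F := filter_from [set: W] (fun w => [set y : order_topology W | (w <= y)%O]).
have FF : Filter F.
  apply: filter_fromT_filter; first by exists w0.
  move=> i j; exists (Order.max i j) => y /= h; split; apply: le_trans h;
    by rewrite le_max lexx ?orbT.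
have PF : ProperFilter F.
  by apply: filter_from_proper => w _; exists w => /=.
have [l [_ Cl]] := cc F PF (@filterT _ F FF).
have [w lw] := cov l.
have := Cl [set y : order_topology W | (w <= y)%O] [set y : order_topology W | (y < w)%O].
case.
- by exists w.
- by apply: open_nbhs_nbhs; split; [exact: lray_open | exact: lw].
by move=> y [/= wy yw]; move: wy; rewrite leNgt yw.
Qed.


Lemma cantor_nat : ~ countable [set: set nat].
Proof.
move=> /countable_injP [f fi].
pose D := [set n | exists A, f A = n /\ ~ A n].
have [Dn|nDn] := pselect (D (f D)).
  case: (Dn) => A [fA nA]; apply: nA.
  have -> : A = D by apply: fi => //; apply/mem_set.
  exact: Dn.
by apply: (nDn); exists D; split.
Qed.

Definition T0 : choiceType := set nat.
Definition R0 : rel T0 := proj1_sig (well_ordering_principle T0).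
Lemma R0wo : well_order R0.
Proof. exact: proj2_sig (well_ordering_principle T0). Qed.

Lemma R0chain : wo_chain R0 predT.
Proof. by move=> A _; apply: R0wo. Qed.

Lemma R0_total x y : R0 x y || R0 y x.
Proof. exact: (wo_chainW R0chain). Qed.

Lemma R0_refl x : R0 x x.
Proof. exact: (wo_chain_reflexive R0chain). Qed.

Lemma R0_anti : antisymmetric R0.
Proof. by move=> x y; apply: (wo_chain_antisymmetric R0chain). Qed.

Lemma R0_trans : transitive R0.
Proof.
move=> y x z xy yz.
have ne : nonempty [mem [:: x; y; z]] by exists x; rewrite inE eqxx.
have [m [[mA mlb] _]] := R0wo ne.
move: mA; rewrite !inE => /or3P[] /eqP mE; subst m.
- by apply: mlb; rewrite !inE eqxx !orbT.
- have yx : R0 y x by apply: mlb; rewrite !inE eqxx.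
  by have -> : x = y by apply: R0_anti; rewrite xy yx.
- have zy : R0 z y by apply: mlb; rewrite !inE eqxx !orbT.
  by have <- : y = z by apply: R0_anti; rewrite yz zy.
Qed.

Definition P0 (y : T0) : Prop := countable [set z | R0 z y].
Definition pw : pred T0 := fun y => `[< P0 y >].
Definition W1 := {y : T0 | pw y}.
HB.instance Definition _ := Choice.on W1.

Definition W1le (a b : W1) := R0 (val a) (val b).
Lemma W1le_refl : reflexive W1le. Proof. by move=> a; apply: R0_refl. Qed.
Lemma W1le_anti : antisymmetric W1le.
Proof. by move=> a b /R0_anti ab; apply: val_inj. Qed.
Lemma W1le_trans : transitive W1le.
Proof. by move=> a b c; apply: R0_trans. Qed.
Lemma W1le_total : total W1le.
Proof. by move=> a b; apply: R0_total. Qed.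

HB.instance Definition _ := Order.Le_isPOrder.Build (Order.Disp tt tt) W1
  W1le_refl W1le_anti W1le_trans.
HB.instance Definition _ := Order.POrder_isTotal.Build (Order.Disp tt tt) W1
  W1le_total.

Lemma W1_leE (a b : W1) : (a <= b)%O = R0 (val a) (val b).
Proof. by []. Qed.

Lemma W1_omega1 : is_omega1 W1.
Proof.
split.
- move=> S [w0 Sw0].
  pose A : {pred T0} := fun t => `[< exists2 w, S w & val w = t >].
  have neA : nonempty A by exists (val w0); rewrite inE; exists w0.
  have [z [[zA zlb] _]] := R0wo neA.
  move: zA; rewrite inE => -[m Sm mz].
  exists m => // y Sy; rewrite W1_leE mz; apply: zlb.
  by rewrite inE; exists y.
- move=> cW.
  have cP : countable [set t | P0 t].
    have sub : [set t | P0 t] `<=` val @` [set: W1].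
      by move=> t Pt; exists (exist pw t (asboolT Pt)).
    apply: (sub_countable (subset_card_le sub)).
    exact: (sub_countable (card_image_le val [set: W1]) cW).
  have [t0 nPt0] : exists t, ~ P0 t.
    apply: contrapT => h; apply: cantor_nat.
    have sub : [set: set nat] `<=` [set t | P0 t].
      by move=> t _; apply: contrapT => nt; apply: h; exists t.
    exact: (sub_countable (subset_card_le sub) cP).
  pose A : {pred T0} := fun t => `[< ~ P0 t >].
  have neA : nonempty A by exists t0; rewrite inE.
  have [m [[mA mlb] _]] := R0wo neA.
  move: mA; rewrite inE; apply.
  have sub : [set z | R0 z m] `<=` \bigcup_(b in [set: bool])
      (if b then [set t | P0 t] else [set m]).
    move=> z zm; have [Pz|nPz] := pselect (P0 z); first by exists true.
    exists false => //=; apply: R0_anti; rewrite zm mlb //.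
    by rewrite inE.
  apply: (sub_countable (subset_card_le sub)).
  by apply: bigcup_countable => // -[] _.
- move=> w; have : P0 (val w) by have := valP w; rewrite /pw => /asboolP.
  move=> /countable_injP [c ci]; apply/countable_injP; exists (c \o val).
  move=> a b; rewrite !inE /= => ab bw e; apply: val_inj; apply: ci => //.
  + by rewrite inE; move: ab => /ltW.
  + by rewrite inE; move: bw => /ltW.
Qed.

Unset Implicit Arguments.

Theorem proposition6p1 (X : Type) (I : set (set X)) :
  countable [set: X] -> infinite_set [set: X] ->
  is_ideal I -> hereditary_weakP I ->
  (forall (d : Order.disp_t) (W : orderType d), is_omega1 W ->
     FinBW I (order_topology W)) /\
  (exists T : topologicalType, ~ compact [set: T] /\ FinBW I T).
Proof.
move=> cX _ hI hP.
have part1 : forall (d : Order.disp_t) (W : orderType d), is_omega1 W ->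
    FinBW I (order_topology W).
  move=> d W hW; split; first exact: order_hausdorff.
  move=> x; exact: (omega1_seq cX hI hP hW x).
split => //; exists (order_topology W1); split.
  exact: (omega1_noncompact W1_omega1).
exact: (part1 _ _ W1_omega1).
Qed.
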